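(* For every network $\mathcal N$, the rate region $\mathcal R^{\mathcal N}$ is a convex set.
   Context: A network is a triple $\mathcal N=(\mathcal L,\mathcal I,D_{\mathcal L})$ where $\mathcal L$ is a finite nonempty set (of links); $\mathcal I=(\mathcal I(l))_{l\in\mathcal L}$ is the collision profile, each $\mathcal I(l)$ being a collection of nonempty subsets of $\mathcal L$; and $D_{\mathcal L}$ assigns an integer $D_{\mathcal L}(l,l')$ to every pair $(l,l')$ with $l'\in\phi$ for some $\phi\in\mathcal I(l)$. A schedule is a map $S:\mathcal L\times\mathbb Z\to\{0,1\}$. $S(l,t)$ has a collision if there exists $\phi\in\mathcal I(l)$ such that $S(l',t+D_{\mathcal L}(l,l'))=1$ for every $l'\in\phi$; otherwise it is collision free. For a schedule $S$ and link $l$, $R_S(l)=\lim_{T\to\infty}\frac1T\sum_{t=0}^{T-1}\iota\big(S(l,t)=1\text{ and }S(l,t)\text{ is collision free}\big)$ when the limit exists; if it exists for all $l$, $R_S=(R_S(l))_{l}$ is the rate vector of $S$. Comparisons $\succcurlyeq$ are entrywise and $R-\epsilon$ subtracts $\epsilon$ from each entry. A nonnegative vector $R\in[0,\infty)^{\mathcal L}$ is achievable if for every $\epsilon>0$ there is a schedule $S$ whose rate vector exists and satisfies $R_S\succcurlyeq R-\epsilon$; the rate region $\mathcal R^{\mathcal N}$ is the set of all achievable nonnegative vectors. *)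

(* Defs.v *)
From mathcomp Require Import all_boot.
From Stdlib Require Import Reals ZArith.
Set Implicit Arguments. Unset Strict Implicit. Unset Printing Implicit Defensive.

(* A network: links L : finType (nonempty), collision profile I (each I l a
   collection of nonempty subsets of L), delays D : L -> L -> Z.
   D is given as a total function; only its values on pairs (l,l') with
   l' in some phi in I l are ever used. *)
Definition schedule (L : finType) := L -> Z -> bool.

Definition collision (L : finType) (I : L -> {set {set L}}) (D : L -> L -> Z)
  (S : schedule L) (l : L) (t : Z) : bool :=
  [exists phi in I l, [forall l' in phi, S l' (t + D l l')%Z]].

Definition nsucc (L : finType) (I : L -> {set {set L}}) (D : L -> L -> Z)
  (S : schedule L) (l : L) (T : nat) : nat :=
  \sum_(t < T) (S l (Z.of_nat t) && ~~ collision I D S l (Z.of_nat t)).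

Definition link_rate (L : finType) (I : L -> {set {set L}}) (D : L -> L -> Z)
  (S : schedule L) (l : L) (r : R) : Prop :=
  Un_cv (fun T => (INR (nsucc I D S l T) / INR T)%R) r.

Definition rate_region (L : finType) (I : L -> {set {set L}}) (D : L -> L -> Z)
  (Rv : L -> R) : Prop :=
  (forall l, (0 <= Rv l)%R) /\
  forall eps : R, (0 < eps)%R ->
    exists (S : schedule L) (RS : L -> R),
      (forall l, link_rate I D S l (RS l)) /\
      (forall l, (Rv l - eps <= RS l)%R).

(* Main.v *)
Require Import Defs.
From mathcomp Require Import all_boot.
From Stdlib Require Import Reals ZArith.
From Stdlib Require Import Lia Lra Psatz ClassicalEpsilon.
From mathcomp Require Import zify.

Module Aux.
Import ssrnat.

Lemma zl2 (k x B : Z) : (0 <= x < B)%Z ->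
  ((k*B + x) / B = k /\ (k*B + x) mod B = x)%Z.
Proof. move=> H. split.
 - rewrite Z.add_comm Z.div_add; last lia. rewrite Z.div_small; lia.
 - rewrite Z.add_comm Z.mod_add; last lia. rewrite Z.mod_small; lia.
Qed.

Lemma zl (k r d T G : Z) : (0 <= r < T)%Z -> (Z.abs d < G)%Z ->
  ((k*(T+G) + r + d) mod (T+G) < T)%Z ->
  ((k*(T+G) + r + d) / (T+G) = k /\ (k*(T+G) + r + d) mod (T+G) = r + d)%Z.
Proof. move=> H H0 H1. case: (Z_lt_le_dec (r+d) 0) => Hc.
 - exfalso. have E1 : (k*(T+G) + r + d = (k-1)*(T+G) + (r+d+(T+G)))%Z by ring.
   rewrite E1 in H1.
   have [_ E] := zl2 (k-1) (r+d+(T+G)) (T+G) ltac:(lia). rewrite E in H1. lia.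
 - rewrite -Z.add_assoc. apply zl2. lia.
Qed.

Section Mix.
Variables (L : finType) (I : L -> {set {set L}}) (D : L -> L -> Z).
Variables (S1 S2 : schedule L) (T G p q : nat).
Hypothesis HG : forall l l', (Z.abs (D l l') < Z.of_nat G)%Z.
Hypothesis Hq : (0 < q)%N.
Hypothesis HT : (0 < T)%N.

Let B := Z.of_nat (T + G).
Definition Sel (k : Z) : schedule L :=
  if (k mod Z.of_nat q <? Z.of_nat p)%Z then S1 else S2.
Definition mix : schedule L := fun l t =>
  ((t mod B <? Z.of_nat T)%Z && Sel (t / B)%Z l (t mod B)%Z).

Lemma mix_block k r l : (0 <= r < Z.of_nat T)%Z ->
  mix l (k * B + r)%Z = Sel k l r.
Proof.
move=> Hr. have [E1 E2] := zl2 k r B ltac:(rewrite /B; lia).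
rewrite /mix E1 E2. have -> : (r <? Z.of_nat T)%Z = true by apply Z.ltb_lt; lia.
by [].
Qed.

Lemma mix_coll k r l : (0 <= r < Z.of_nat T)%Z ->
  collision I D mix l (k * B + r)%Z -> collision I D (Sel k) l r.
Proof.
move=> Hr /existsP [phi /andP [Hphi /forallP H]].
apply/existsP; exists phi; rewrite Hphi /=; apply/forallP => l'.
apply/implyP => Hl'. have := implyP (H l') Hl'.
rewrite /mix => /andP [Hlt HS].
have Hlt' := proj1 (Z.ltb_lt _ _) Hlt.
have EB : B = (Z.of_nat T + Z.of_nat G)%Z by rewrite /B; lia.
rewrite EB in Hlt' HS.
have [E1 E2] := zl k r (D l l') (Z.of_nat T) (Z.of_nat G) Hr (HG l l') Hlt'.
by rewrite E1 E2 in HS.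
Qed.

Lemma mix_period l t : mix l (t + Z.of_nat q * B)%Z = mix l t.
Proof.
have HB : B <> 0%Z by rewrite /B; lia.
rewrite /mix Z.mod_add // Z.div_add // /Sel.
have -> : ((t / B + Z.of_nat q) mod Z.of_nat q = (t / B) mod Z.of_nat q)%Z.
  have -> : (t / B + Z.of_nat q = t/B + 1 * Z.of_nat q)%Z by ring.
  rewrite Z.mod_add //; lia.
by [].
Qed.

Lemma mix_periodn l (t : nat) : mix l (Z.of_nat (q * (T + G) + t)) = mix l (Z.of_nat t).
Proof.
have -> : Z.of_nat (q * (T + G) + t) = (Z.of_nat t + Z.of_nat q * B)%Z by rewrite /B; lia.
exact: mix_period.
Qed.

Lemma coll_periodn l (t : nat) : collision I D mix l (Z.of_nat (q * (T + G) + t))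
   = collision I D mix l (Z.of_nat t).
Proof.
rewrite /collision. apply: eq_existsb => phi. congr (_ && _).
apply: eq_forallb => l'. congr (_ ==> _).
have -> : (Z.of_nat (q * (T + G) + t) + D l l' = (Z.of_nat t + D l l') + Z.of_nat q * B)%Z
  by rewrite /B; lia.
exact: mix_period.
Qed.

Lemma nsucc_period l m : nsucc I D mix l (q * (T + G) + m) =
   nsucc I D mix l (q * (T + G)) + nsucc I D mix l m.
Proof.
rewrite /nsucc big_split_ord /=. congr (_ + _).
apply: eq_bigr => i _ /=. by rewrite mix_periodn coll_periodn.
Qed.

Lemma nsucc_blocks l k : \sum_(j < k) nsucc I D (Sel (Z.of_nat j)) l T <=
   nsucc I D mix l (k * (T + G)).
Proof.
elim: k => [|k IH]; first by rewrite big_ord0.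
rewrite big_ord_recr /= /nsucc mulSnr big_split_ord /=.
apply: leq_add; first exact: IH.
rewrite big_split_ord /=. apply: leq_trans (leq_addr _ _).
apply: leq_sum => r _.
have Hr : (0 <= Z.of_nat r < Z.of_nat T)%Z by have := ltn_ord r; lia.
have E : Z.of_nat (k * (T + G) + r) = (Z.of_nat k * B + Z.of_nat r)%Z by rewrite /B; lia.
rewrite E mix_block //.
case: (Sel (Z.of_nat k) l (Z.of_nat r)) => //=.
case Hc: (collision I D mix l _).
- by rewrite (mix_coll _ _ _ Hr Hc).
- by rewrite leq_b1.
Qed.

Lemma Sel_small (j : nat) : (j < q)%N ->
  Sel (Z.of_nat j) = if (j < p)%N then S1 else S2.
Proof.
move=> Hj. rewrite /Sel Z.mod_small; last lia.
case: ifP => H; case: ifP => H'; try done.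
- move/Z.ltb_lt: H. lia.
- have : (Z.of_nat j <? Z.of_nat p)%Z = true by apply/Z.ltb_lt; lia. by rewrite H.
Qed.

End Mix.

Lemma sum_sel (L : finType) (I : L -> {set {set L}}) (D : L -> L -> Z)
  (S1 S2 : schedule L) (T p q : nat) l : (p <= q)%N ->
  \sum_(j < q) nsucc I D (@Sel L S1 S2 p q (Z.of_nat j)) l T =
  p * nsucc I D S1 l T + (q - p) * nsucc I D S2 l T.
Proof.
move=> Hpq. rewrite -(big_mkord xpredT (fun j => nsucc I D (@Sel L S1 S2 p q (Z.of_nat j)) l T)).
rewrite (@big_cat_nat _ _ _ p 0 q _ _ (leq0n p) Hpq) /=.
rewrite (eq_big_nat _ _ (F2 := fun _ => nsucc I D S1 l T)); last first.
  move=> i /andP [_ Hi]. have Hiq : (i < q)%N by exact: leq_trans Hi Hpq.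
  by rewrite (@Sel_small L S1 S2 1 0 p q (leq_ltn_trans (leq0n i) Hiq) isT i Hiq) Hi.
rewrite [X in _ + X](eq_big_nat _ _ (F2 := fun _ => nsucc I D S2 l T)); last first.
  move=> i /andP [Hi Hi'].
  by rewrite (@Sel_small L S1 S2 1 0 p q (leq_ltn_trans (leq0n i) Hi') isT i Hi') ltnNge Hi.
by rewrite !sum_nat_const_nat subn0.
Qed.

Lemma nsucc_le (L : finType) (I : L -> {set {set L}}) (D : L -> L -> Z)
  (S : schedule L) l T : nsucc I D S l T <= T.
Proof.
rewrite /nsucc. apply: (@leq_trans (\sum_(t < T) 1)); first exact: leq_sum (fun i _ => leq_b1 _).
by rewrite sum1_card card_ord.
Qed.

End Aux.

Lemma div_lt (x y e : R) : (0 < y)%R -> (x < e * y)%R -> (x / y < e)%R.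
Proof. intros Hy H. apply Rmult_lt_reg_r with y; auto.
replace (x / y * y)%R with x by (field; lra). lra. Qed.
Lemma div_ge (x y e : R) : (0 < y)%R -> (e * y <= x)%R -> (e <= x / y)%R.
Proof. intros Hy H. apply Rmult_le_reg_r with y; auto.
replace (x / y * y)%R with x by (field; lra). lra. Qed.

Lemma exists_nat_ge (x : R) : exists n : nat, (x <= INR n)%R.
Proof.
destruct (archimed x) as [H1 H2].
exists (Z.to_nat (up x)).
destruct (Z_lt_le_dec (up x) 0) as [Hn|Hp].
- have := pos_INR (Z.to_nat (up x)). have : (IZR (up x) < 0)%R by apply IZR_lt. lra.
- rewrite INR_IZR_INZ Z2Nat.id //. lra.
Qed.

Module Aux2.
Import ssrnat.

Lemma periodic_cv (g : nat -> nat) (P : nat) : (0 < P)%N ->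
  (forall m, g (P + m) = g P + g m) -> (forall m, g m <= m) ->
  Un_cv (fun n => INR (g n) / INR n)%R (INR (g P) / INR P)%R.
Proof.
move=> HP Hg Hle.
have Hk : forall k s, g (k * P + s) = k * g P + g s.
  elim=> [|k IH] s; first by rewrite !mul0n !add0n.
  by rewrite mulSn -addnA Hg IH mulSn addnA.
move=> eps Heps.
have [N0 HN0] := exists_nat_ge (INR P / eps + 1)%R.
exists (maxn N0 1) => n Hn.
have Hn' : (maxn N0 1 <= n)%N by apply/leP.
have Hn1 : (1 <= n)%N by apply: leq_trans Hn'; rewrite leq_maxr.
have HnN : (N0 <= n)%N by apply: leq_trans Hn'; rewrite leq_maxl.
have En : n = n %/ P * P + n %% P := divn_eq n P.
have Hs : (n %% P < P)%N := ltn_pmod n HP.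
have Hgs := Hle (n %% P).
have HgP := Hle P.
rewrite /R_dist.
have EnR : INR n = (INR (n %/ P) * INR P + INR (n %% P))%R.
  by rewrite {1}En plus_INR mult_INR.
have EgR : INR (g n) = (INR (n %/ P) * INR (g P) + INR (g (n %% P)))%R.
  by rewrite {1}En Hk plus_INR mult_INR.
have HPr : (0 < INR P)%R by apply: lt_0_INR; apply/ltP.
have HnR : (INR P / eps + 1 <= INR n)%R.
  apply: Rle_trans HN0 _. apply: le_INR. by apply/leP.
have Hnpos : (0 < INR n)%R by apply: lt_0_INR; apply/ltP.
have Hsr : (INR (n %% P) < INR P)%R by apply: lt_INR; apply/ltP.
have Hgsr : (INR (g (n %% P)) <= INR (n %% P))%R by apply: le_INR; apply/leP.
have HgPr : (INR (g P) <= INR P)%R by apply: le_INR; apply/leP.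
have H0s := pos_INR (n %% P). have H0g := pos_INR (g (n %% P)).
have H0c := pos_INR (g P).
have HPn : (INR P < eps * INR n)%R.
  have : (INR P / eps * eps < INR n * eps)%R by apply Rmult_lt_compat_r; lra.
  replace (INR P / eps * eps)%R with (INR P) by (field; lra). lra.
have Ediff : (INR (g n) / INR n - INR (g P) / INR P =
   (INR (g (n %% P)) * INR P - INR (n %% P) * INR (g P)) / (INR n * INR P))%R.
  rewrite EgR EnR. field. rewrite -EnR. lra.
rewrite Ediff. apply Rabs_def1.
- apply div_lt; first nra. nra.
- set num := (INR (g (n %% P)) * INR P - INR (n %% P) * INR (g P))%R.
  have H : (- num / (INR n * INR P) < eps)%R by apply div_lt; rewrite /num; nra.
  have -> : (num / (INR n * INR P) = - (- num / (INR n * INR P)))%R by field; nra.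
  lra.
Qed.

End Aux2.

Lemma div_le (x y e : R) : (0 < y)%R -> (x <= e * y)%R -> (x / y <= e)%R.
Proof. intros Hy H. apply Rmult_le_reg_r with y; auto.
replace (x / y * y)%R with x by (field; lra). lra. Qed.

Lemma final_ineq (a b x1 x2 Tr Gr e r1 r2 : R) : (0 <= a <= 1)%R -> (0 <= b <= 1)%R ->
  (a - b <= e)%R -> (b - a <= e)%R -> (0 <= x1 <= 1)%R -> (0 <= x2 <= 1)%R ->
  (r1 - e <= x1)%R -> (r2 - e <= x2)%R -> (0 < Tr)%R -> (0 <= Gr)%R -> (Gr <= e * Tr)%R ->
  (a * r1 + (1 - a) * r2 - 3 * e <= Tr / (Tr + Gr) * (b * x1 + (1 - b) * x2))%R.
Proof.
intros. set (y := (b * x1 + (1 - b) * x2)%R).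
assert (Hy : (0 <= y <= 1)%R) by (unfold y; nra).
assert (Hy2 : (a * x1 + (1 - a) * x2 - e <= y)%R) by (unfold y; nra).
assert (Hy3 : (y - e <= Tr / (Tr + Gr) * y)%R).
{ replace (Tr / (Tr + Gr) * y)%R with ((Tr * y) / (Tr + Gr))%R by (field; lra).
  apply div_ge; nra. }
nra.
Qed.

Module Aux3.
Import ssrnat.
Import Aux Aux2.

Lemma main (L : finType) (I : L -> {set {set L}}) (D : L -> L -> Z)
  (R1 R2 : L -> R) (a : R) :
    rate_region I D R1 -> rate_region I D R2 ->
    (0 <= a <= 1)%R ->
    rate_region I D (fun l => a * R1 l + (1 - a) * R2 l)%R.
Proof.
move=> [H1p H1] [H2p H2] Ha. split.
  move=> l. have := H1p l; have := H2p l. nra.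
move=> eps Heps. pose e := (eps/3)%R. have He : (0 < e)%R by rewrite /e; lra.
have [S1 [RS1 [HS1r HS1b]]] := H1 (e/2)%R ltac:(lra).
have [S2 [RS2 [HS2r HS2b]]] := H2 (e/2)%R ltac:(lra).
pose G := (\max_(l : L) \max_(l' : L) Z.abs_nat (D l l')).+1.
have HG : forall l l', (Z.abs (D l l') < Z.of_nat G)%Z.
  move=> l l'. have h1 := @leq_bigmax _ (fun l' => Z.abs_nat (D l l')) l'.
  have h2 := @leq_bigmax _ (fun l => \max_(l' : L) Z.abs_nat (D l l')) l.
  rewrite /= in h1 h2. rewrite -Zabs2Nat.id_abs /G. lia.
have Hex : forall l, exists N, forall n, (N <= n)%N ->
   (R_dist (INR (nsucc I D S1 l n) / INR n) (RS1 l) < e/2)%R /\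
   (R_dist (INR (nsucc I D S2 l n) / INR n) (RS2 l) < e/2)%R.
  move=> l. have [N1 HN1] := HS1r l (e/2)%R ltac:(lra).
  have [N2 HN2] := HS2r l (e/2)%R ltac:(lra).
  exists (maxn N1 N2) => n Hn. split; [apply HN1 | apply HN2]; apply/leP;
  apply: leq_trans Hn; rewrite ?leq_maxl ?leq_maxr //.
pose Nf l := proj1_sig (constructive_indefinite_description _ (Hex l)).
have HNf : forall l n, (Nf l <= n)%N ->
   (R_dist (INR (nsucc I D S1 l n) / INR n) (RS1 l) < e/2)%R /\
   (R_dist (INR (nsucc I D S2 l n) / INR n) (RS2 l) < e/2)%R.
  move=> l. exact: (proj2_sig (constructive_indefinite_description _ (Hex l))).
pose Nm := \max_(l : L) Nf l.
have [q0 Hq0] := exists_nat_ge (1/e)%R. pose q := q0.+1.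
have Hqn : (0 < q)%N by [].
have HqR : INR q = (INR q0 + 1)%R by rewrite /q S_INR.
have H0q0 := pos_INR q0.
have Hqpos : (0 < INR q)%R by lra.
have Heq : (1 <= e * INR q)%R.
  have : (1 / e * e <= INR q * e)%R by apply Rmult_le_compat_r; lra.
  replace (1 / e * e)%R with 1%R by (field; lra). lra.
have [Hu1 Hu2] := archimed (a * INR q)%R.
have Haq : (0 <= a * INR q)%R by nra.
have Hup : (0 <= up (a * INR q) - 1)%Z.
  have : (0 < IZR (up (a * INR q)))%R by lra.
  move/lt_IZR. lia.
pose p := Z.to_nat (up (a * INR q) - 1).
have HpR : INR p = (IZR (up (a * INR q)) - 1)%R.
  by rewrite /p INR_IZR_INZ Z2Nat.id // minus_IZR.
have Hpq : (p <= q)%N.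
  apply/leP; apply INR_le. nra.
have Hb1 : (a - INR p / INR q <= e)%R.
  have -> : (a - INR p / INR q = (a * INR q - INR p) / INR q)%R by field; lra.
  apply div_le => //. lra.
have Hb2 : (INR p / INR q - a <= e)%R.
  have -> : (INR p / INR q - a = (INR p - a * INR q) / INR q)%R by field; lra.
  apply div_le => //. lra.
have Hb0 : (0 <= INR p / INR q <= 1)%R.
  have := pos_INR p. have := le_INR _ _ (ssrnat.leP Hpq). move=> h h'.
  split; first (apply div_ge; lra).
  apply div_le => //. lra.
have [T0 HT0] := exists_nat_ge (INR G / e)%R.
pose T := maxn (maxn T0 Nm) 1.
have HTpos : (0 < T)%N by rewrite /T leq_maxr.
have HTN : (Nm <= T)%N by rewrite /T (leq_trans (leq_maxr T0 Nm)) // leq_maxl.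
have HT0T : (T0 <= T)%N by rewrite /T (leq_trans (leq_maxl T0 Nm)) // leq_maxl.
have HTR : (0 < INR T)%R by apply: lt_0_INR; apply/ltP.
have HGT : (INR G <= e * INR T)%R.
  have hT0 : (INR T0 <= INR T)%R by apply: le_INR; apply/leP.
  have : (INR G / e * e <= INR T * e)%R by apply Rmult_le_compat_r; lra.
  replace (INR G / e * e)%R with (INR G) by (field; lra). lra.
pose Q := @mix L S1 S2 T G p q.
have HP : (0 < q * (T + G))%N by rewrite muln_gt0 Hqn addn_gt0 HTpos.
exists Q. exists (fun l => INR (nsucc I D Q l (q * (T + G))) / INR (q * (T + G)))%R.
split.
- move=> l. rewrite /link_rate. apply: periodic_cv => //.
  + move=> m. exact: (nsucc_period L I D S1 S2 T G p q Hqn HTpos l m).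
  + move=> m. exact: nsucc_le.
- move=> l.
  have [Hx1 Hx2] := HNf l T (leq_trans (@leq_bigmax _ Nf l) HTN).
  have Hc := nsucc_blocks L I D S1 S2 T G p q HG Hqn HTpos l q.
  rewrite sum_sel // in Hc.
  have HcR := le_INR _ _ (ssrnat.leP Hc).
  have HPR : (0 < INR (q * (T + G)))%R by apply: lt_0_INR; apply/ltP.
  apply: Rle_trans (Rmult_le_compat_r _ _ _ (Rlt_le _ _ (Rinv_0_lt_compat _ HPR)) HcR).
  set n1 := nsucc I D S1 l T. set n2 := nsucc I D S2 l T.
  have En : (INR (p * n1 + (q - p) * n2) * / INR (q * (T + G)) =
     INR T / (INR T + INR G) * (INR p / INR q * (INR n1 / INR T) +
        (1 - INR p / INR q) * (INR n2 / INR T)))%R.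
    rewrite plus_INR !mult_INR (minus_INR _ _ (ssrnat.leP Hpq)) plus_INR.
    field. have hh := pos_INR G. lra.
  rewrite En.
  have X1 : (0 <= INR n1 / INR T <= 1)%R.
    split; first (apply div_ge => //; rewrite Rmult_0_l; apply: pos_INR).
    apply div_le => //; rewrite Rmult_1_l; apply: le_INR; apply/ssrnat.leP; exact: nsucc_le.
  have X2 : (0 <= INR n2 / INR T <= 1)%R.
    split; first (apply div_ge => //; rewrite Rmult_0_l; apply: pos_INR).
    apply div_le => //; rewrite Rmult_1_l; apply: le_INR; apply/ssrnat.leP; exact: nsucc_le.
  have [_ Y1] := Rabs_def2 _ _ Hx1. have [_ Y2] := Rabs_def2 _ _ Hx2.
  have Z1 := HS1b l. have Z2 := HS2b l.
  rewrite -/n1 in Y1; rewrite -/n2 in Y2.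
  have F := final_ineq a (INR p / INR q) (INR n1 / INR T) (INR n2 / INR T)
     (INR T) (INR G) e (R1 l) (R2 l) Ha Hb0 Hb1 Hb2 X1 X2
     ltac:(lra) ltac:(lra) HTR (pos_INR G) HGT.
  rewrite /e in F. lra.
Qed.

End Aux3.

Theorem lemma1 (L : finType) (HL : (0 < #|L|)%nat)
  (I : L -> {set {set L}})
  (HI : forall l phi, phi \in I l -> phi != set0)
  (D : L -> L -> Z) :
  forall (R1 R2 : L -> R) (a : R),
    rate_region I D R1 -> rate_region I D R2 ->
    (0 <= a <= 1)%R ->
    rate_region I D (fun l => a * R1 l + (1 - a) * R2 l)%R.
Proof.
move=> R1 R2 a. exact: Aux3.main.
Qed.
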